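(* Let $t$ be a ground term (well-formed tree) over a ranked alphabet in which no node is labelled with the same unary letter as its father. Apply to $t$: the chain compression for the set of unary letters of $t$; then, for a partition $\Gamma_1,\Gamma_2$ of the set of unary letters of the resulting tree, the $(\Gamma_1,\Gamma_2)$ pair compression, yielding $t'$; then the leaf compression for $(\Gamma_{\ge 1},\Gamma_0)$, where $\Gamma_0$ is the set of constants and $\Gamma_{\ge1}$ the set of other letters of $t'$, yielding $t''$. Then for some partition $\Gamma_1,\Gamma_2$ it holds that $|t''| < \frac{3|t|}{4}$.
   Context: $|t|$ denotes the number of nodes. A tree is well-formed if each node labelled $f$ has exactly $\mathrm{ar}(f)$ ordered children; unary letters have arity $1$, constants arity $0$. For a unary letter $a$, an $a$-maximal chain is a maximal (upward and downward) sequence of nodes $v_1,\dots,v_\ell$ labelled $a$ with $v_{j+1}$ the child of $v_j$. Chain compression for $\Gamma$: simultaneously for all $a\in\Gamma$ and $\ell\ge1$, replace each $a$-maximal chain of length $\ell$ by one node labelled by a fresh unary letter $a_\ell$ (keeping the father and the child). $(\Gamma_1,\Gamma_2)$ pair compression, for disjoint sets of unary letters: every node labelled $a\in\Gamma_1$ whose child is labelled $b\in\Gamma_2$ is merged with that child into a single node labelled by a fresh unary letter $c_{ab}$; done for all such pairs simultaneously. Leaf compression for $(\Gamma_{\ge1},\Gamma_0)$: every node labelled $f\in\Gamma_{\ge1}$ of arity $m$ whose children at exactly the positions $i_1<\dots<i_\ell$ are leaves labelled by constants $a_1,\dots,a_\ell\in\Gamma_0$ is relabelled by a fresh letter $f'$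 (depending on $f,i_1,a_1,\dots,i_\ell,a_\ell$) of arity $m-\ell$ and these children are deleted; done simultaneously for all nodes. All fresh letters are new. *)

(* Defs.v *)
From mathcomp Require Import all_boot.
Set Implicit Arguments. Unset Strict Implicit. Unset Printing Implicit Defensive.

Inductive tree (L : Type) : Type := Node of L & seq (tree L).
Arguments Node {L}.

Definition label {L} (t : tree L) : L := let: Node f _ := t in f.
Definition children {L} (t : tree L) : seq (tree L) := let: Node _ ts := t in ts.

Fixpoint nodes {L} (t : tree L) : nat :=
  let: Node _ ts := t in (sumn (map nodes ts)).+1.

Fixpoint wf {L} (ar : L -> nat) (t : tree L) : bool :=
  let: Node f ts := t in (size ts == ar f) && all (wf ar) ts.

Fixpoint no_rep {A : eqType} (ar : A -> nat) (t : tree A) : bool :=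
  let: Node a ts := t in
  all (fun c => ~~ ((ar (label c) == 1) && (label c == a))) ts && all (no_rep ar) ts.

(* The original alphabet is A; every
   letter created by a compression is a new constructor application, hence is
   fresh (different from all letters occurring in the tree it is applied to).
   - Base a       : original letter a
   - Chain a l    : the letter a_l of chain compression
   - Pair a b     : the letter c_ab of pair compression
   - LeafC f ps   : the letter f' of leaf compression, ps = [(i_1,a_1);...;(i_l,a_l)] *)
Inductive letter (A : Type) : Type :=
| Base of A
| Chain of A & nat
| Pair of letter A & letter A
| LeafC of letter A & seq (nat * letter A).
Arguments Base {A}. Arguments Chain {A}. Arguments Pair {A}. Arguments LeafC {A}.

Section Compressions.
Variables (A : eqType) (arA : A -> nat).

Fixpoint lar (x : letter A) : nat :=
  match x with
  | Base a => arA a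
  | Chain _ _ => 1
  | Pair _ _ => 1
  | LeafC f ps => lar f - size ps
  end.

(* Chain compression for the set of all unary letters of the tree.
   [cc k t]: t is the current node, k = number of nodes above it in its
   current a-maximal chain (0 at the top of a chain). *)
Fixpoint cc (k : nat) (t : tree A) : tree (letter A) :=
  let: Node a ts := t in
  if arA a == 1 then
    match ts with
    | [:: c] => if label c == a then cc k.+1 c
                else Node (Chain a k.+1) [:: cc 0 c]
    | _ => Node (Chain a k.+1) (map (cc 0) ts)
    end
  else Node (Base a) (map (cc 0) ts).

Definition chain_compression (t : tree A) : tree (letter A) := cc 0 t.

(* (Gamma1, Gamma2) pair compression, where Gamma1 = unary letters satisfying P
   and Gamma2 = unary letters not satisfying P. *)
Fixpoint pc (P : letter A -> bool) (t : tree (letter A)) : tree (letter A) :=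
  let: Node a ts := t in
  match ts with
  | [:: Node b us] =>
      if [&& lar a == 1, P a, lar b == 1 & ~~ P b]
      then Node (Pair a b) (map (pc P) us)
      else Node a (map (pc P) ts)
  | _ => Node a (map (pc P) ts)
  end.

Definition is_const_leaf (t : tree (letter A)) : bool :=
  (lar (label t) == 0) && (nilp (children t)).

Fixpoint lc (t : tree (letter A)) : tree (letter A) :=
  let: Node f ts := t in
  if lar f == 0 then Node f (map lc ts)
  else
    let ps := [seq (ic.1, label ic.2) |
               ic <- zip (iota 0 (size ts)) ts & is_const_leaf ic.2] in
    let rs := map (fun c => (is_const_leaf c, lc c)) ts in
    Node (LeafC f ps) [seq r.2 | r <- rs & ~~ r.1].

End Compressions.

(* Main.v *)
Require Import Defs.
From mathcomp Require Import all_boot.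
From mathcomp Require Import zify.
Set Implicit Arguments. Unset Strict Implicit. Unset Printing Implicit Defensive.

Fixpoint tree_ind2 (L : Type) (P : tree L -> Prop)
  (H : forall a ts, (forall c, List.In c ts -> P c) -> P (Node a ts)) (t : tree L) : P t :=
  let: Node a ts := t in
  H a ts ((fix F (l : seq (tree L)) : forall c, List.In c l -> P c :=
     match l return forall c, List.In c l -> P c with
     | [::] => fun c hc => False_ind _ hc
     | c0 :: l' => fun c hc => match hc with
        | or_introl e => eq_ind c0 P (@tree_ind2 L P H c0) c e
        | or_intror h => F l' c h end
     end) ts).

Lemma In_all (T : Type) (p : pred T) s c : all p s -> List.In c s -> p c.
Proof. elim: s => //= x s IH /andP[px ps] [<-|h] //; exact: IH. Qed.

Lemma eq_map_In (T U : Type) (f g : T -> U) s :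
  (forall x, List.In x s -> f x = g x) -> map f s = map g s.
Proof. elim: s => //= x s IH H; rewrite H ?IH //; [move=> y hy; apply: H|]; by [right|left]. Qed.

Lemma all_In (T : Type) (p : pred T) s :
  (forall x, List.In x s -> p x) -> all p s.
Proof. elim: s => //= x s IH H; rewrite H ?IH //; [move=> y hy; apply: H|]; by [right|left]. Qed.

Lemma sumn_add_In (T : Type) (f g h : T -> nat) s :
  (forall x, List.In x s -> f x + g x = h x) -> sumn (map f s) + sumn (map g s) = sumn (map h s).
Proof.
elim: s => //= x s IH H; rewrite -IH; last by move=> y hy; apply: H; right.
have := H x (or_introl erefl); lia.
Qed.

Lemma eq_all_In (T : Type) (p q : pred T) s :
  (forall x, List.In x s -> p x = q x) -> all p s = all q s.
Proof. elim: s => //= x s IH H; rewrite H ?IH //; [move=> y hy; apply: H|]; by [right|left]. Qed.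

Fixpoint leaves (L : Type) (t : tree L) : nat :=
  let: Node _ ts := t in if nilp ts then 1 else sumn (map (@leaves L) ts).

Arguments leaves {L}.

Section S.
Variables (A : eqType) (arA : A -> nat).

Definition g (a : A) : letter A := if arA a == 1 then Chain a 1 else Base a.
Fixpoint rl (t : tree A) : tree (letter A) := let: Node a ts := t in Node (g a) (map rl ts).

Lemma lar_g a : lar arA (g a) = arA a.
Proof. by rewrite /g; case: ifP => //= /eqP. Qed.

Lemma cc_rl t : no_rep arA t -> cc arA 0 t = rl t.
Proof.
elim/tree_ind2: t => a ts IH /= /andP[hc hr].
have E: map (cc arA 0) ts = map rl ts.
  apply: eq_map_In => c hc'; apply: IH => //; exact: (In_all hr hc').
rewrite /g; case: ifP => ha; last by rewrite E.
case: ts IH hc hr E => [|c [|c2 ts]] IH hc hr E //=.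
  move: hc => /=; rewrite andbT; case: ifP => [/eqP hl|_ _]; last by move: E => /= [<-].
  by rewrite hl ha.
by congr (Node _ _); exact: E.
Qed.

Lemma nodes_rl t : nodes (rl t) = nodes t.
Proof.
elim/tree_ind2: t => a ts IH /=; rewrite -map_comp; congr (_.+1); congr sumn.
by apply: eq_map_In => c hc /=; exact: IH.
Qed.

Lemma leaves_rl t : leaves (rl t) = leaves t.
Proof.
elim/tree_ind2: t => a ts IH /=; rewrite /nilp size_map -map_comp; congr (if _ then _ else sumn _).
by apply: eq_map_In => c hc /=; exact: IH.
Qed.

Lemma wf_rl t : wf (lar arA) (rl t) = wf arA t.
Proof.
elim/tree_ind2: t => a ts IH /=; rewrite size_map lar_g all_map; congr (_ && _).
by apply: eq_all_In => c hc /=; exact: IH.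
Qed.

Definition PQ (Q : pred A) (x : letter A) : bool := if x is Chain a _ then Q a else false.

Definition mrg (P : letter A -> bool) (a : letter A) (ts : seq (tree (letter A))) : bool :=
  if ts is [:: Node b _] then [&& lar arA a == 1, P a, lar arA b == 1 & ~~ P b] else false.

Fixpoint prs (P : letter A -> bool) (s : tree (letter A)) : nat :=
  let: Node a ts := s in mrg P a ts + sumn (map (prs P) ts).

Definition ehead (a : A) (ts : seq (tree A)) : seq (A * A) :=
  if ts is [:: Node b _] then (if (arA a == 1) && (arA b == 1) then [:: (a, b)] else [::])
   else [::].
Arguments ehead : simpl never.

Lemma ehead1 a c : ehead a [:: c] =
  if (arA a == 1) && (arA (label c) == 1) then [:: (a, label c)] else [::].
Proof. by case: c. Qed.

Lemma ehead2 a c c2 ts : ehead a [:: c, c2 & ts] = [::].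
Proof. by case: c. Qed.

Fixpoint edges (t : tree A) : seq (A * A) :=
  let: Node a ts := t in ehead a ts ++ flatten (map edges ts).

Lemma prs_rl Q t : prs (PQ Q) (rl t) = count (fun e => Q e.1 && ~~ Q e.2) (edges t).
Proof.
elim/tree_ind2: t => a ts IH /=; rewrite count_cat count_flatten -!map_comp; congr (_ + _).
  case: ts {IH} => [|[b us] [|? ?]] //=; rewrite /mrg /ehead /= !lar_g /g.
  by case: (arA a == 1); case: (arA b == 1) => //=; rewrite ?andbF //= addn0.
congr sumn; apply: eq_map_In => c hc /=; exact: IH.
Qed.

Lemma edges_neq t : no_rep arA t -> all (fun e => e.1 != e.2) (edges t).
Proof.
elim/tree_ind2: t => a ts IH /= /andP[hc hr]; rewrite all_cat; apply/andP; split.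
  case: ts {IH hr} hc => [|[b us] [|? ?]] //=; rewrite /ehead /= andbT.
  case: ifP => //= /andP[_ ->] /=; by rewrite eq_sym andbT.
elim: ts IH hr {hc} => //= c ts IHl IH /andP[h1 h2]; rewrite all_cat (IH c (or_introl erefl) h1) /=.
by apply: IHl => // c' h; apply: IH; right.
Qed.

Lemma count_bound t : wf arA t ->
  nodes t + 2 + (arA (label t) != 1) <= 4 * leaves t + size (edges t).
Proof.
elim/tree_ind2: t => a ts IH /= /andP[/eqP hs hw].
have H: forall l : seq (tree A), (forall x, List.In x l -> wf arA x ->
       nodes x + 2 + (arA (label x) != 1) <= 4 * leaves x + size (edges x)) ->
     all (wf arA) l ->
     sumn (map nodes l) + 2 * size l <= 4 * sumn (map leaves l) + size (flatten (map edges l)).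
  elim=> //= x l IHl IHx /andP[wx wl].
  have := IHx x (or_introl erefl) wx; have := IHl (fun y hy => IHx y (or_intror hy)) wl.
  rewrite size_cat; lia.
case: ts IH hs hw => [|c [|c2 ts]] IH hs hw.
- by rewrite /= -hs.
- have ha : arA a = 1 by rewrite -hs.
  rewrite ha; clear hs; move: hw => /= /andP[wc _].
  have h := IH c (or_introl erefl) wc.
  move: h; rewrite ehead1 ha size_cat cats0 !addn0; case: (arA (label c) == 1) => /=; lia.
- have := H _ IH hw; rewrite -hs.
  rewrite ehead2 /=; lia.
Qed.

Section PC.
Variable P : letter A -> bool.

Lemma pc_node a ts : mrg P a ts = false -> pc arA P (Node a ts) = Node a (map (pc arA P) ts).
Proof. by case: ts => [|[b us] [|? ?]] //= ->. Qed.

Lemma pc_props s : wf (lar arA) s ->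
  [/\ wf (lar arA) (pc arA P s), nodes (pc arA P s) + prs P s = nodes s,
      leaves (pc arA P s) = leaves s & lar arA (label (pc arA P s)) = lar arA (label s)].
Proof.
elim/tree_ind2: s => a ts IH /andP[/eqP hs hw].
case M: (mrg P a ts).
  case: ts M IH hs hw => [|[b us] [|? ?]] //= /and4P[ha pa hb pb] IH hs hw.
  rewrite ha pa hb pb /=.
  move: hw => /= /andP[wc _].
  have E: pc arA P (Node b us) = Node b (map (pc arA P) us).
    by apply: pc_node; case: us {IH wc} => [|[? ?] [|? ?]] //=; rewrite (negbTE pb) !andbF.
  have [w1 n1 l1 _] := IH _ (or_introl erefl) wc; rewrite E in w1 n1 l1.
  split => //=.
  - by move: w1 => /= /andP[/eqP -> ->]; rewrite andbT.
  - by move: n1 => /=; rewrite !addn0 /=; lia.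
  - by move: l1 => /= ->; rewrite addn0.
rewrite pc_node // /= M add0n.
have IH': forall c, List.In c ts -> [/\ wf (lar arA) (pc arA P c), nodes (pc arA P c) + prs P c = nodes c,
      leaves (pc arA P c) = leaves c & lar arA (label (pc arA P c)) = lar arA (label c)].
  by move=> c hc; apply: IH => //; exact: (In_all hw hc).
split => //.
- rewrite size_map hs eqxx all_map /=; apply: all_In => c hc /=.
  by have [] := IH' c hc.
- rewrite addSn -map_comp; congr _.+1; apply: sumn_add_In => c hc /=.
  by have [] := IH' c hc.
- rewrite /nilp size_map -map_comp; case: ifP => // _; congr sumn.
  by apply: eq_map_In => c hc /=; have [] := IH' c hc.
Qed.
End PC.
Definition sepsum (l : seq (tree (letter A))) :=
  sumn (map nodes [seq r.2 | r <- map (fun c => (is_const_leaf arA c, lc arA c)) l & ~~ r.1]).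

Lemma sepsum_cons c l : sepsum (c :: l) =
  (if is_const_leaf arA c then 0 else nodes (lc arA c)) + sepsum l.
Proof. by rewrite /sepsum /=; case: (is_const_leaf arA c). Qed.

Lemma lc_nodes s : wf (lar arA) s ->
  nodes (lc arA s) + leaves s = nodes s + (lar arA (label s) == 0).
Proof.
elim/tree_ind2: s => f ts IH /andP[/eqP hs hw].
case: (boolP (lar arA f == 0)) => hf.
  have ts0 : ts = [::] by apply/nilP; rewrite /nilp hs (eqP hf).
  by subst ts; rewrite /= hf.
have hn : ~~ nilp ts by rewrite /nilp hs.
have H: forall l, (forall c, List.In c l -> wf (lar arA) c ->
     nodes (lc arA c) + leaves c = nodes c + (lar arA (label c) == 0)) ->
   all (wf (lar arA)) l ->
   sepsum l + sumn (map leaves l) = sumn (map nodes l).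
  elim=> // c l IHl IHc /andP[wc wl].
  have IH2 := IHl (fun y hy => IHc y (or_intror hy)) wl.
  have IH1 := IHc c (or_introl erefl) wc.
  rewrite sepsum_cons /=.
  case: c IH1 wc {IHc} => h us IH1 wc.
  move: wc => /andP[/eqP hus _].
  rewrite (_ : is_const_leaf arA (Node h us) = (lar arA h == 0) && nilp us) //.
  case: (boolP (lar arA h == 0)) => hh /=.
    have us0 : us = [::] by apply/nilP; rewrite /nilp hus (eqP hh).
    subst us; rewrite /=; lia.
  have hun : ~~ nilp us by rewrite /nilp hus.
  move: IH1; rewrite /= (negbTE hh) addn0 => IH1.
  move: IH2 IH1; rewrite (negbTE hun) /=; lia.
move: (H ts IH hw) => H'.
rewrite /= (negbTE hf) (negbTE hn) /=.
rewrite /sepsum in H'; lia.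
Qed.

Lemma maxcut_gen (V : seq A) (E : seq (A * A)) :
  all (fun e => e.1 != e.2) E -> all (fun e => (e.1 \in V) && (e.2 \in V)) E ->
  exists Q : pred A, size E <= 2 * count (fun e => Q e.1 != Q e.2) E.
Proof.
elim: V E => [|v V IH] E hne hin.
  by exists xpred0; case: E hne hin => // e E _ /= /andP[/andP[]]; rewrite in_nil.
pose tch := fun e : A * A => (e.1 == v) || (e.2 == v).
pose E1 := filter (predC tch) E.
pose E2 := filter tch E.
have [Q' HQ'] : exists Q : pred A, size E1 <= 2 * count (fun e => Q e.1 != Q e.2) E1.
  apply: IH.
    by apply/allP => e; rewrite mem_filter => /andP[_ he]; exact: (allP hne e he).
  apply/allP => e; rewrite mem_filter => /andP[ht he]; move: (allP hin e he).
  move: ht => /norP[h1 h2] /andP; rewrite !inE (negbTE h1) (negbTE h2) /=.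
  by case=> -> ->.
pose Qb (b : bool) := fun x => if x == v then b else Q' x.
have F1 : forall b, count (fun e => Qb b e.1 != Qb b e.2) E1 = count (fun e => Q' e.1 != Q' e.2) E1.
  move=> b; apply: eq_in_count => e; rewrite mem_filter => /andP[/norP[h1 h2] _].
  by rewrite /Qb (negbTE h1) (negbTE h2).
have F2 : count (fun e => Qb true e.1 != Qb true e.2) E2 + count (fun e => Qb false e.1 != Qb false e.2) E2 = size E2.
  rewrite -(count_predC (fun e => Qb true e.1 != Qb true e.2)); congr (_ + _).
  apply: eq_in_count => e; rewrite mem_filter => /andP[ht he]; have := allP hne e he.
  move: ht; case: e {he} => x y /=; rewrite /Qb.
  case: (eqVneq x v) => [->|hx]; case: (eqVneq y v) => [->|hy]; rewrite /tch /= ?eqxx ?(negbTE hx) ?(negbTE hy) //; by case: (Q' _).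
have pe : perm_eq (E2 ++ E1) E by rewrite perm_filterC.
have key : forall b, count (fun e => Qb b e.1 != Qb b e.2) E =
   count (fun e => Q' e.1 != Q' e.2) E1 + count (fun e => Qb b e.1 != Qb b e.2) E2.
  by move=> b; rewrite -((permP pe) _) count_cat addnC F1.
have sz : size E = size E1 + size E2 by rewrite -(perm_size pe) size_cat addnC.
case: (leqP (size E2) (2 * count (fun e => Qb true e.1 != Qb true e.2) E2)) => h.
  by exists (Qb true); rewrite key sz; lia.
by exists (Qb false); rewrite key sz; lia.
Qed.

Lemma maxcut E : all (fun e => e.1 != e.2) E ->
  exists Q : pred A, size E <= 2 * count (fun e => Q e.1 != Q e.2) E.
Proof.
move=> h; apply: (maxcut_gen (V := flatten (map (fun e => [:: e.1; e.2]) E))) => //.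
apply/allP => e he; apply/andP; split; apply/flattenP; exists [:: e.1; e.2];
  rewrite ?inE ?eqxx ?orbT //; by apply/mapP; exists e.
Qed.

Lemma count_split (Q : pred A) E :
  count (fun e => Q e.1 && ~~ Q e.2) E + count (fun e => ~~ Q e.1 && Q e.2) E =
  count (fun e => Q e.1 != Q e.2) E.
Proof. elim: E => //= e E IH; rewrite -IH; case: (Q e.1); case: (Q e.2) => /=; lia. Qed.

End S.

Theorem lemma2p3 (A : eqType) (arA : A -> nat) (t : tree A) :
  wf arA t -> no_rep arA t -> 1 < nodes t ->
  exists P : letter A -> bool,
    let t' := pc arA P (chain_compression arA t) in
    let t'' := lc arA t' in
    4 * nodes t'' < 3 * nodes t.
Proof.
move=> wft nrt n1.
have [Q HQ] := maxcut (edges_neq nrt).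
have hs := count_split Q (edges arA t).
have [Q0 HQ0] : exists Q0, size (edges arA t) <= 4 * prs arA (PQ Q0) (rl arA t).
  case: (leqP (count (fun e => Q e.1 != Q e.2) (edges arA t))
               (2 * count (fun e => Q e.1 && ~~ Q e.2) (edges arA t))) => h.
    by exists Q; rewrite prs_rl; lia.
  exists (predC Q); rewrite prs_rl.
  rewrite (@eq_count _ _ (fun e => ~~ Q e.1 && Q e.2)); first lia.
  by move=> e /=; rewrite negbK.
exists (PQ Q0); cbv zeta; rewrite /chain_compression cc_rl //.
have wu : wf (lar arA) (rl arA t) by rewrite wf_rl.
have [w1 n1' l1 lb] := pc_props (PQ Q0) wu.
have hl := lc_nodes w1.
have cb := count_bound wft.
have lrl : lar arA (label (rl arA t)) = arA (label t) by case: t {wft nrt n1 HQ hs HQ0 wu w1 n1' l1 lb hl cb} => a ts; rewrite /= lar_g.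
have nz : arA (label t) != 0.
  case: t {HQ hs HQ0 wu w1 n1' l1 lb hl cb lrl} wft nrt n1 => a [|c ts] /= /andP[/eqP hs _] //.
  by rewrite -hs.
rewrite lb lrl (negbTE nz) addn0 l1 leaves_rl in hl.
rewrite nodes_rl in n1'.
have cb' := leq_trans (leq_addr _ _) cb; clear cb.
lia.
Qed.
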